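(* For every $n\ge1$ and $k\ge0$, the number of words $w\in\mathcal{P}_{n-1}^2(321)$ with $\mathrm{des}(w)=k$ equals the number of $321$-avoiding permutations of $[n]$ with exactly $k$ peaks.
   Context: $\mathfrak{S}_n$ is the set of permutations of $[n]=\{1,\dots,n\}$; $\mathrm{FIX}(\pi)=\{i:\pi(i)=i\}$. A $2$-arrangement of $[n]$ is a pair $(\pi,\phi)$ with $\pi\in\mathfrak{S}_n$ and $\phi:\mathrm{FIX}(\pi)\to\{-1,-2\}$ arbitrary. Its permutation form is obtained from $\pi(1)\cdots\pi(n)$ by replacing $\pi(i)$ with $-1$ for each $i\in\mathrm{FIX}(\pi)$ with $\phi(i)=-1$, then replacing every occurrence of the $j$-th smallest positive letter by $j$ for all $j$. $\mathcal{P}_n^2$ is the set of these permutation forms ($\mathcal{P}_0^2$ consists of the empty word). For an integer word $w=w_1\cdots w_n$, $\mathrm{des}(w)=|\{i\in[n-1]:w_i>w_{i+1}\}|$; $\mathrm{red}(w)$ replaces every occurrence of the $j$-th smallest letter by $j$; $w$ avoids $\sigma\in\mathfrak{S}_3$ if there are no $i_1<i_2<i_3$ with $\mathrm{red}(w_{i_1}w_{i_2}w_{i_3})=\sigma$; $\mathcal{P}_n^2(\sigma)$ is the set of words of $\mathcal{P}_n^2$ avoiding $\sigma$. A peak of a permutation $\pi\in\mathfrak{S}_n$ is an index $i$ with $1<i<n$ and $\pi_{i-1}<\pi_i>\pi_{i+1}$. *)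

(* Defs.v *)
From mathcomp Require Import all_boot all_order all_algebra all_fingroup.
Set Implicit Arguments. Unset Strict Implicit. Unset Printing Implicit Defensive.
Import Order.TTheory GRing.Theory Num.Theory.
Local Open Scope ring_scope.

Definition red (w : seq int) : seq nat :=
  [seq (count (fun y => y < x) (undup w)).+1 | x <- w].

Definition avoids (sigma : seq nat) (w : seq int) : bool :=
  [forall i : 'I_(size w), forall j : 'I_(size w), forall l : 'I_(size w),
     ~~ [&& (i < j)%N, (j < l)%N &
            red [:: nth (0:int) w i; nth (0:int) w j; nth (0:int) w l] == sigma]].

Definition pat321 : seq nat := [:: 3%N; 2%N; 1%N].

Definition des (w : seq int) : nat :=
  (  \sum_(i < (size w).-1) nat_of_bool (nth (0:int) w i.+1 < nth (0:int) w i)%R)%N.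

Definition std_pos (w : seq int) : seq int :=
  [seq (if 0 < x then ((count (fun y => (0 < y) && (y < x)) (undup w)).+1)%:Z
        else x) | x <- w].

Definition perm_word n (s : 'S_n) : seq int :=
  [seq ((val (s i)).+1)%:Z | i <- enum 'I_n].

(* Permutation form of the 2-arrangement (s, phi); phi i = true encodes
   phi(i) = -1 and phi i = false encodes phi(i) = -2 (only values at
   fixed points matter). *)
Definition perm_form n (s : 'S_n) (phi : {ffun 'I_n -> bool}) : seq int :=
  std_pos [seq (if (s i == i) && phi i then -1 else ((val (s i)).+1)%:Z)
          | i <- enum 'I_n].

Definition P2 (n : nat) : seq (seq int) :=
  undup [seq perm_form s phi | s <- enum [set: 'S_n],
                               phi <- enum [set: {ffun 'I_n -> bool}]].

Definition peaks n (s : 'S_n) : nat :=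
  let w := perm_word s in
  (\sum_(1 <= i < n.-1)
     nat_of_bool ((nth (0:int) w i.-1 < nth 0 w i) && (nth (0:int) w i.+1 < nth 0 w i))%R)%N.

(* Main.v *)
Require Import Defs.
From mathcomp Require Import all_boot all_order all_algebra all_fingroup.
Set Implicit Arguments. Unset Strict Implicit. Unset Printing Implicit Defensive.
Import Order.TTheory GRing.Theory Num.Theory.

Lemma red321 (a b c : int) :
  (red [:: a; b; c] == pat321) = ((c < b) && (b < a))%R.
Proof.
apply/idP/idP.
- rewrite /red /pat321 /= => /eqP [].
  move: (if _ then _ else _) => U Ha Hb Hc.
  apply/andP; split.
  + rewrite ltNge; apply/negP => bc.
    have : (count (fun y => y < b)%R U <= count (fun y => y < c)%R U)%N.
      by apply: sub_count => y /= yb; apply: lt_le_trans yb bc.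
    by rewrite Hb Hc.
  + rewrite ltNge; apply/negP => ab.
    have : (count (fun y => y < a)%R U <= count (fun y => y < b)%R U)%N.
      by apply: sub_count => y /= yb; apply: lt_le_trans yb ab.
    by rewrite Ha Hb.
- move=> /andP [cb ba].
  have ca : (c < a)%R by apply: lt_trans cb ba.
  rewrite /red /pat321 /= !inE (gt_eqF ba) (gt_eqF ca) (gt_eqF cb) /=.
  by rewrite !ltxx ba ca cb (lt_gtF ba) (lt_gtF ca) (lt_gtF cb).
Qed.

Definition av321 (w : seq int) : Prop :=
  forall i j l, (i < j)%N -> (j < l)%N -> (l < size w)%N ->
    ~~ ((nth 0%R w l < nth 0%R w j) && (nth 0%R w j < nth 0%R w i))%R.

Lemma avoidsP w : avoids pat321 w <-> av321 w.
Proof.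
split.
- move=> /forallP H i j l ij jl ls.
  have is' : (i < size w)%N by apply: ltn_trans ij (ltn_trans jl ls).
  have js : (j < size w)%N by apply: ltn_trans jl ls.
  move: (H (Ordinal is')) => /forallP /(_ (Ordinal js)) /forallP /(_ (Ordinal ls)).
  by rewrite /= ij jl red321.
- move=> H; apply/forallP => i; apply/forallP => j; apply/forallP => l.
  rewrite red321; apply/negP => /and3P [ij jl E].
  by move: (H i j l ij jl (ltn_ord l)); rewrite E.
Qed.
Lemma count_iota_lt v n : (v <= n)%N -> count (fun y => y < v)%N (iota 0 n) = v.
Proof.
move=> hv; rewrite -(subnKC hv) iotaD count_cat.
rewrite (@eq_in_count _ _ predT (iota 0 v)); last first.
  by move=> y; rewrite mem_iota add0n => /andP [_ ->].
rewrite count_predT size_iota (@eq_in_count _ _ pred0); last first.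
  by move=> y; rewrite mem_iota add0n => /andP [H _]; rewrite /= ltnNge H.
by rewrite count_pred0 addn0.
Qed.

Section Perm.
Variable m : nat.
Implicit Types s t : 'S_m.+1.

Definition sv s (x : nat) : nat := s (inord x).

Lemma sv_lt s x : (sv s x < m.+1)%N.
Proof. exact: ltn_ord. Qed.

Lemma sv_inj s x y : (x <= m)%N -> (y <= m)%N -> sv s x = sv s y -> x = y.
Proof.
move=> hx hy /val_inj /perm_inj /(congr1 (@nat_of_ord _)).
by rewrite !inordK.
Qed.

Lemma sv_surj s v : (v <= m)%N -> exists2 x, (x <= m)%N & sv s x = v.
Proof.
move=> hv; exists (val ((s^-1)%g (inord v))); first by rewrite -ltnS ltn_ord.
by rewrite /sv inord_val permKV inordK.
Qed.

Lemma count_sv s v : (v <= m.+1)%N ->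
  count (fun y => sv s y < v)%N (iota 0 m.+1) = v.
Proof.
move=> hv.
have -> : count (fun y => sv s y < v)%N (iota 0 m.+1) =
          count (fun y => y < v)%N (map (sv s) (iota 0 m.+1)) by rewrite count_map.
have P : perm_eq (map (sv s) (iota 0 m.+1)) (iota 0 m.+1).
  apply: uniq_perm; last first.
  - move=> y; rewrite mem_iota add0n; apply/mapP/idP.
      by move=> [x _ ->]; apply: sv_lt.
    move=> hy; have [x hx <-] := sv_surj s hy.
    by exists x => //; rewrite mem_iota add0n ltnS.
  - exact: iota_uniq.
  - rewrite map_inj_in_uniq ?iota_uniq // => x y.
    rewrite !mem_iota !add0n !ltnS; exact: sv_inj.
by rewrite (seq.permP P) count_iota_lt.
Qed.

Definition gv (a v : nat) : int := if (v < a)%N then (-1)%R else (v - a)%:Z%R.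

Lemma gv_mono a v v' : (v <= v')%N -> (gv a v <= gv a v')%R.
Proof.
rewrite /gv => h; case: ltnP => h1; case: ltnP => h2 //.
- by move: (leq_trans h1 h); rewrite leqNgt h2.
- by rewrite lez_nat leq_sub2r.
Qed.

Lemma gv_lt a v v' : (gv a v < gv a v')%R -> (v < v')%N.
Proof. move=> H; rewrite ltnNge; apply/negP => /(gv_mono a); by rewrite leNgt H. Qed.

Lemma gv_strict a v v' : (v < v')%N -> (a <= v')%N -> (gv a v < gv a v')%R.
Proof.
rewrite /gv => h ha; rewrite [(v' < a)%N]ltnNge ha /=; case: ltnP => h1.
- by [].
- by rewrite ltz_nat ltn_sub2rE.
Qed.

Definition Phi s : seq int := [seq gv (sv s 0) (sv s i.+1) | i <- iota 0 m].

Lemma size_Phi s : size (Phi s) = m.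
Proof. by rewrite size_map size_iota. Qed.

Lemma nth_Phi s i : (i < m)%N -> @nth int 0%R (Phi s) i = gv (sv s 0) (sv s i.+1).
Proof. by move=> hi; rewrite (nth_map 0%N) ?size_iota // nth_iota. Qed.

Lemma nth_pw s i : (i < m.+1)%N -> @nth int 0%R (perm_word s) i = ((sv s i).+1)%:Z%R.
Proof.
move=> hi; rewrite /perm_word (nth_map ord0) ?size_enum_ord //.
have -> : nth ord0 (enum 'I_m.+1) i = inord i.
  by apply: val_inj; rewrite /= nth_enum_ord // inordK.
by [].
Qed.


Definition good s := forall x y, (0 < x)%N -> (x < y)%N -> (y <= m)%N ->
  (sv s y < sv s x)%N -> (sv s x < sv s 0)%N -> False.

Definition avs s := forall i j l, (i < j)%N -> (j < l)%N -> (l <= m)%N ->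
  ~~ ((sv s l < sv s j) && (sv s j < sv s i))%N.

Lemma size_pw s : size (perm_word s) = m.+1.
Proof. by rewrite size_map size_enum_ord. Qed.

Lemma avs_iff s : av321 (perm_word s) <-> avs s.
Proof.
have lt3 : forall i j l, (i < j)%N -> (j < l)%N -> (l < m.+1)%N ->
   ((i < m.+1) && (j < m.+1))%N.
  move=> i j l ij jl hl; have hj := ltn_trans jl hl.
  by rewrite hj (ltn_trans ij hj).
split => H i j l ij jl hl.
- have hl' : (l < m.+1)%N by [].
  have /andP [hi hj] := lt3 _ _ _ ij jl hl'.
  have := H i j l ij jl; rewrite size_pw !nth_pw // !ltz_nat !ltnS; exact.
- rewrite size_pw in hl.
  have /andP [hi hj] := lt3 _ _ _ ij jl hl.
  rewrite !nth_pw // !ltz_nat !ltnS; exact: H.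
Qed.

Lemma avs_good s : avs s -> good s.
Proof.
move=> H x y x0 xy ym h1 h2; have := H 0%N x y x0 xy ym.
by rewrite h1 h2.
Qed.

Lemma avs_Phi s : avs s -> av321 (Phi s).
Proof.
move=> H i j l ij jl; rewrite size_Phi => hl.
have hj := ltn_trans jl hl; have hi := ltn_trans ij hj.
rewrite !nth_Phi //; apply/negP => /andP [h1 h2].
by have := H i.+1 j.+1 l.+1 ij jl hl; rewrite (gv_lt h1) (gv_lt h2).
Qed.

Lemma good_Phi_avs s : good s -> av321 (Phi s) -> avs s.
Proof.
move=> G A i j l ij jl hl; apply/negP => /andP [lj ji].
have j0 : (0 < j)%N by apply: leq_ltn_trans ij.
case: i ij ji => [|i] ij ji.
  by apply: (G j l).
case hj: (sv s j < sv s 0)%N.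
  by apply: (G j l).
case: j j0 ij jl lj ji hj => [|j] // _ ij jl lj ji hj.
case: l jl hl lj => [|l] // jl hl lj.
have a_j : (sv s 0 <= sv s j.+1)%N by rewrite leqNgt hj.
have := A i j l ij jl; rewrite size_Phi => /(_ hl).
have hj' : (j < m)%N := ltn_trans (jl : (j < l)%N) hl; have hi' : (i < m)%N := ltn_trans (ij : (i < j)%N) hj'.
rewrite !nth_Phi // (gv_strict lj a_j) (gv_strict ji) //.
exact: leq_trans a_j (ltnW ji).
Qed.

Lemma des_peaks s : avs s -> des (Phi s) = peaks s.
Proof.
move=> H; have G := avs_good H.
rewrite /des size_Phi /peaks /= (big_addn 0 _ 1) big_mkord subn1.
apply: eq_bigr => i _.
have hi : (i.+1 < m)%N by rewrite -ltn_predRL ltn_ord.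
rewrite addn1 /= !nth_Phi //.
have e1 := nth_pw s (ltnW (ltnW hi)); have e2 := nth_pw s (ltnW hi : (i.+1 < m.+1)%N); have e3 := nth_pw s (hi : (i.+2 < m.+1)%N).
rewrite e1 e2 e3.
rewrite !ltz_nat !ltnS.
congr (nat_of_bool _).
have key : (sv s i.+2 < sv s i.+1)%N -> (sv s i < sv s i.+1)%N.
  move=> h; have := H i i.+1 i.+2 (ltnSn _) (ltnSn _) hi; rewrite h /= -leqNgt.
  rewrite leq_eqVlt => /orP [/eqP E|//].
  by have := sv_inj (ltnW (ltnW hi)) (ltnW hi) E => /n_Sn.
apply/idP/idP.
- move=> /gv_lt h; by rewrite h key.
- move=> /andP [_ h]; case ha: (sv s i.+1 < sv s 0)%N.
    by case: (G i.+1 i.+2 (ltn0Sn _) (ltnSn _) hi h ha).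
  by apply: gv_strict h _; rewrite leqNgt ha.
exact: ltnW.
Qed.


Lemma count_shift (P : pred nat) n :
  count P (iota 0 n.+1) = P 0%N + count (fun j => P j.+1) (iota 0 n).
Proof. by rewrite /= (iotaDl 1 0) count_map. Qed.

Lemma gv_eqN1 a v : (gv a v == (-1)%R) = (v < a)%N.
Proof. by rewrite /gv; case: ltnP. Qed.

Definition nneg (w : seq int) := count (fun j => nth 0%R w j == (-1)%R) (iota 0 m).
Definition npos (w : seq int) := count (fun j => 0 < nth 0%R w j)%R (iota 0 m).

Definition psi (w : seq int) (x : nat) : nat :=
  if x is i.+1 then
    (if nth 0%R w i == (-1)%R then count (fun j => nth 0%R w j == (-1)%R) (iota 0 i)
     else nneg w + `|nth 0%R w i|%N)
  else nneg w.

Lemma nneg_Phi s : nneg (Phi s) = sv s 0.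
Proof.
rewrite /nneg (@eq_in_count _ _ (fun j => sv s j.+1 < sv s 0)%N); last first.
  by move=> j; rewrite mem_iota add0n => /andP [_ hj]; rewrite nth_Phi // gv_eqN1.
have := count_sv s (ltnW (sv_lt s 0)); rewrite count_shift ltnn add0n; exact.
Qed.

Lemma psi_Phi s x : good s -> (x <= m)%N -> sv s x = psi (Phi s) x.
Proof.
move=> G; case: x => [|i] hi /=; first by rewrite nneg_Phi.
rewrite nth_Phi // gv_eqN1 nneg_Phi.
case: ifP => small; last first.
  have a_le : (sv s 0 <= sv s i.+1)%N by rewrite leqNgt small.
  by rewrite /gv ltnNge a_le /= subnKC.
rewrite (@eq_in_count _ _ (fun j => sv s j.+1 < sv s 0)%N); last first.
  move=> j; rewrite mem_iota add0n => /andP [_ hj].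
  by rewrite nth_Phi ?gv_eqN1 // (ltn_trans hj hi).
have := count_sv s (ltnW (sv_lt s i.+1)); rewrite count_shift.
have -> : (sv s 0 < sv s i.+1)%N = false.
  by apply/negbTE; rewrite -leqNgt ltnW.
rewrite add0n -(subnKC (ltnW hi)) iotaD count_cat add0n.
rewrite [X in (_ + X)%N](@eq_in_count _ _ pred0); last first.
  move=> j; rewrite mem_iota => /andP [ij jm] /=.
  apply/negbTE/negP => lt.
  rewrite leq_eqVlt in ij; case/orP: ij => [/eqP ij|ij].
    by rewrite ij ltnn in lt.
  apply: (G i.+1 j.+1) => //.
  by rewrite -(subnKC (ltnW hi)).
rewrite count_pred0 addn0 => <-.
apply: eq_in_count => j; rewrite mem_iota add0n => /andP [_ ji].
apply/idP/idP => h.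
- apply: leq_trans h _; exact: ltnW.
- rewrite ltn_neqAle; apply/andP; split.
    apply/eqP => E; have := sv_inj _ _ E.
    by move=> /(_ (ltn_trans ji hi) hi) [] /eqP; rewrite ltn_eqF.
  rewrite leqNgt; apply/negP => lt.
  by apply: (G j.+1 i.+1) => //; apply: ltnW.
Qed.

Lemma Phi_inj s t : good s -> good t -> Phi s = Phi t -> s = t.
Proof.
move=> Gs Gt E; apply/permP => x; apply: val_inj.
have hx : (x <= m)%N by rewrite -ltnS ltn_ord.
have := psi_Phi Gs hx; have := psi_Phi Gt hx; rewrite E /sv inord_val => <- //.
Qed.


Definition wf (w : seq int) := [/\ size w = m,
  forall i, (i < m)%N -> (nth 0%R w i == (-1)%R) || (0 < nth 0%R w i)%R,
  forall i j, (i < m)%N -> (j < m)%N -> (0 < nth 0%R w i)%R ->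
     nth 0%R w i = nth 0%R w j -> i = j &
  forall i, (i < m)%N -> (0 < nth 0%R w i)%R -> (`|nth 0%R w i| <= npos w)%N ].

Lemma posK (x : int) : (0 < x)%R -> Posz `|x|%N = x.
Proof. by case: x. Qed.

Lemma count_prefix_lt (P : pred nat) i j :
  (i < j)%N -> P i -> (count P (iota 0 i) < count P (iota 0 j))%N.
Proof.
move=> ij Pi; rewrite -(subnKC (ltnW ij)) iotaD count_cat add0n -(subnSK ij) /=.
by rewrite Pi add1n addnS ltnS leq_addr.
Qed.

Lemma count_prefix_le (P : pred nat) i j :
  (i <= j)%N -> (count P (iota 0 i) <= count P (iota 0 j))%N.
Proof.
move=> ij; rewrite -(subnKC ij) iotaD count_cat add0n; exact: leq_addr.
Qed.

Lemma nneg_npos w : (forall i, (i < m)%N -> (nth 0%R w i == (-1)%R) || (0 < nth 0%R w i)%R) ->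
  (nneg w + npos w)%N = m.
Proof.
move=> E; rewrite /nneg /npos.
rewrite -[RHS](size_iota 0 m) -(count_predC (fun j => nth 0%R w j == (-1)%R)).
congr (_ + _)%N; apply: eq_in_count => j; rewrite mem_iota add0n => /andP [_ hj] /=.
case/orP: (E j hj) => [/eqP -> //| h]; rewrite h; apply/esym/negP => /eqP e.
by rewrite e in h.
Qed.

Lemma wf_surj w : wf w -> exists s, good s /\ Phi s = w.
Proof.
case=> S E D B.
have NP := nneg_npos E.
have psmall : forall i, (i < m)%N -> nth 0%R w i == (-1)%R -> (psi w i.+1 < nneg w)%N.
  move=> i hi h; rewrite /= h; exact: count_prefix_lt.
have pbig : forall i, (i < m)%N -> nth 0%R w i != (-1)%R ->
    (nneg w < psi w i.+1 <= m)%N.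
  move=> i hi h; rewrite /= (negbTE h).
  have pos : (0 < nth 0%R w i)%R by case/orP: (E i hi) => // /eqP e; rewrite e eqxx in h.
  rewrite -NP leq_add2l (B i hi pos) andbT -[X in (X < _)%N]addn0 ltn_add2l absz_gt0.
  by rewrite gt_eqF.
have psi_le : forall x, (x <= m)%N -> (psi w x <= m)%N.
  case=> [|i] hi; first by rewrite /= -NP leq_addr.
  case h: (nth 0%R w i == (-1)%R).
    by apply: ltnW; apply: leq_trans (psmall i hi h) _; rewrite -NP leq_addr.
  by case/andP: (pbig i hi (negbT h)).
have psi_inj : forall x y, (x <= m)%N -> (y <= m)%N -> psi w x = psi w y -> x = y.
  have cls : forall i, (i < m)%N -> psi w i.+1 != nneg w.
    move=> i hi; case h: (nth 0%R w i == (-1)%R).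
      by rewrite ltn_eqF // psmall.
    by case/andP: (pbig i hi (negbT h)) => h1 _; rewrite gtn_eqF.
  case=> [|i] [|j] hi hj //.
  - by move=> e; have := cls j hj; rewrite -e /= eqxx.
  - by move=> e; have := cls i hi; rewrite e /= eqxx.
  move=> e; congr _.+1.
  case hwi: (nth 0%R w i == (-1)%R); case hwj: (nth 0%R w j == (-1)%R).
  - move: e; rewrite /= hwi hwj => e.
    case: (ltngtP i j) => // ij.
      by have h := @count_prefix_lt (fun j => nth 0%R w j == (-1)%R) _ _ ij hwi; rewrite e ltnn in h.
    by have h := @count_prefix_lt (fun j => nth 0%R w j == (-1)%R) _ _ ij hwj; rewrite e ltnn in h.
  - have := psmall i hi hwi; have := pbig j hj (negbT hwj).
    by rewrite e => /andP [h1 _] h2; have := ltn_trans h1 h2; rewrite ltnn.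
  - have := psmall j hj hwj; have := pbig i hi (negbT hwi).
    by rewrite e => /andP [h1 _] h2; have := ltn_trans h1 h2; rewrite ltnn.
  - move: e; rewrite /= hwi hwj => /addnI e.
    have pi : (0 < nth 0%R w i)%R by case/orP: (E i hi) => //; rewrite hwi.
    have pj : (0 < nth 0%R w j)%R by case/orP: (E j hj) => //; rewrite hwj.
    apply: D => //; by rewrite -(posK pi) -(posK pj) e.
pose F (x : 'I_m.+1) : 'I_m.+1 := inord (psi w x).
have Finj : injective F.
  move=> x y /(congr1 (@nat_of_ord _)).
  have lx : (psi w x < m.+1)%N by rewrite ltnS psi_le // -ltnS.
  have ly : (psi w y < m.+1)%N by rewrite ltnS psi_le // -ltnS.
  rewrite /F (inordK lx) (inordK ly) => /psi_inj e.
  by apply: val_inj; apply: e; rewrite -ltnS.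
exists (perm Finj).
have svE : forall x, (x <= m)%N -> sv (perm Finj) x = psi w x.
  move=> x hx; have lx : (psi w x < m.+1)%N by rewrite ltnS psi_le.
  by rewrite /sv permE /F inordK ?ltnS // inordK.
split.
- move=> x y x0 xy ym; rewrite !svE //; last by apply: ltnW (leq_trans xy ym).
  case: x x0 xy => [|i] // _ xy.
  case: y xy ym => [|j] // ij jm.
  have im : (i < m)%N by apply: ltn_trans (ij : (i < j)%N) jm.
  move=> lt1 lt2.
  case hwi: (nth 0%R w i == (-1)%R); last first.
    by case/andP: (pbig i im (negbT hwi)) => h _; have := ltn_trans h lt2; rewrite ltnn.
  case hwj: (nth 0%R w j == (-1)%R); last first.
    case/andP: (pbig j jm (negbT hwj)) => h _.
    by have := ltn_trans (ltn_trans h lt1) lt2; rewrite ltnn.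
  move: lt1; rewrite /= hwi hwj.
  have := @count_prefix_lt (fun j => nth 0%R w j == (-1)%R) i j ij hwi.
  by move=> h1 h2; have := ltn_trans h1 h2; rewrite ltnn.
- apply: (@eq_from_nth _ 0%R); first by rewrite size_Phi S.
  move=> i; rewrite size_Phi => hi; rewrite nth_Phi // !svE // -?ltnS //; have -> : psi w 0 = nneg w by [].
  case hw: (nth 0%R w i == (-1)%R).
    by rewrite /gv (psmall i hi hw); apply/esym/eqP.
  case/andP: (pbig i hi (negbT hw)) => h _.
  rewrite /gv ltnNge (ltnW h) /= /psi hw addKn.
  by apply: posK; case/orP: (E i hi) => //; rewrite hw.
Qed.


Lemma wf_Phi s : wf (Phi s).
Proof.
have E : forall i, (i < m)%N ->
    (nth 0%R (Phi s) i == (-1)%R) || (0 < nth 0%R (Phi s) i)%R.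
  move=> i hi; rewrite nth_Phi // /gv; case: ltnP => //= h.
  rewrite ltz_nat subn_gt0 ltn_neqAle h andbT; apply/eqP => e.
  by have := sv_inj (leq0n m) hi e.
have NP := nneg_npos E; rewrite nneg_Phi in NP.
split => //.
- exact: size_Phi.
- move=> i j hi hj; rewrite !nth_Phi // /gv.
  case: ltnP => // hsi _; case: ltnP => // hsj [] e.
  have : sv s i.+1 = sv s j.+1 by rewrite -(subnK hsi) e subnK.
  by move=> /sv_inj => /(_ hi hj) [].
- move=> i hi; rewrite nth_Phi // /gv; case: ltnP => // hsi _ /=.
  have -> : npos (Phi s) = (m - sv s 0)%N by rewrite -NP addKn.
  rewrite leq_sub2r // -ltnS; exact: sv_lt.
Qed.

Lemma count_lt_in (T : eqType) (P Q : pred T) (l : seq T) x :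
  subpred P Q -> x \in l -> Q x -> ~~ P x -> (count P l < count Q l)%N.
Proof.
move=> PQ; elim: l => [//|y l IH]; rewrite inE => /orP [/eqP <-|xl] Qx nPx /=.
  rewrite (negbTE nPx) Qx add0n add1n ltnS; exact: sub_count.
have h := IH xl Qx nPx; case Py: (P y).
  by rewrite (PQ y Py) /= !add1n ltnS.
by rewrite add0n; apply: leq_trans h (leq_addl _ _).
Qed.

Lemma count_nth (P : pred int) (w : seq int) :
  count P w = count (fun j => P (nth 0%R w j)) (iota 0 (size w)).
Proof. by rewrite -{1}(mkseq_nth 0%R w) /mkseq count_map. Qed.

Lemma card_iota (Q : pred nat) : #|[set i : 'I_m | Q i]| = count Q (iota 0 m).
Proof.
rewrite -val_enum_ord count_map -size_filter.
rewrite cardE; congr size. rewrite {1}/enum_mem. rewrite -enumT.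
by apply: eq_filter => i; rewrite /= inE.
Qed.

Lemma P2_wf w : w \in P2 m -> wf w.
Proof.
rewrite mem_undup => /allpairsP [[s phi] [_ _ ->]] /=.
rewrite /perm_form.
set u := [seq (if (s i == i) && phi i then (-1)%R else Posz (s i).+1) | i <- enum 'I_m].
pose stdf (x : int) := if (0 < x)%R
  then Posz (count (fun y => (0 < y) && (y < x))%R (undup u)).+1 else x.
have swE : std_pos u = map stdf u by [].
have su : size u = m by rewrite size_map size_enum_ord.
have nthu : forall i (hi : (i < m)%N), nth 0%R u i =
   (if (s (Ordinal hi) == Ordinal hi) && phi (Ordinal hi) then (-1)%R
    else Posz (s (Ordinal hi)).+1).
  move=> i hi; rewrite (nth_map (Ordinal hi)) ?size_enum_ord //.
  have -> : nth (Ordinal hi) (enum 'I_m) i = Ordinal hi.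
    by apply: val_inj; rewrite /= nth_enum_ord.
  by [].
have upos : forall i (hi : (i < m)%N), (0 < nth 0%R u i)%R ->
    nth 0%R u i = Posz (s (Ordinal hi)).+1.
  by move=> i hi; rewrite nthu; case: ifP.
have uneg : forall i (hi : (i < m)%N), ~~ (0 < nth 0%R u i)%R -> nth 0%R u i = (-1)%R.
  by move=> i hi; rewrite nthu; case: ifP.
have nthw : forall i, (i < m)%N -> nth 0%R (std_pos u) i = stdf (nth 0%R u i).
  by move=> i hi; rewrite swE (nth_map 0%R) ?su.
have stdpos : forall x, (0 < stdf x)%R = (0 < x)%R.
  by move=> x; rewrite /stdf; case: ifP => // ->.
have stdmono : forall x x', x \in u -> (0 < x)%R -> (x < x')%R -> (stdf x < stdf x')%R.
  move=> x x' xu x0 xx'; have x'0 := lt_trans x0 xx'.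
  rewrite /stdf x0 x'0 ltz_nat ltnS.
  apply: (count_lt_in (x := x)).
  - by move=> y /andP [-> /= h]; apply: lt_trans h xx'.
  - by rewrite mem_undup.
  - by rewrite /= x0 xx'.
  - by rewrite /= ltxx andbF.
split.
- by rewrite swE size_map su.
- move=> i hi; rewrite nthw //; case h: (0 < nth 0%R u i)%R.
    by rewrite -stdpos in h; rewrite h orbT.
  by rewrite (uneg i hi (negbT h)).
- move=> i j hi hj; rewrite !nthw // => pi e.
  have pui : (0 < nth 0%R u i)%R by rewrite -stdpos.
  have puj : (0 < nth 0%R u j)%R by rewrite -stdpos -e.
  have ue : nth 0%R u i = nth 0%R u j.
    case: (ltgtP (nth 0%R u i) (nth 0%R u j)) => // lt.
      by have := stdmono _ _ (mem_nth 0%R (etrans (congr1 _ su) hi : (i < size u)%N)) pui lt; rewrite e ltxx.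
    by have := stdmono _ _ (mem_nth 0%R (etrans (congr1 _ su) hj : (j < size u)%N)) puj lt; rewrite e ltxx.
  move: ue; rewrite (upos i hi pui) (upos j hj puj) => [] [] /val_inj /perm_inj.
  by move=> /(congr1 (@nat_of_ord _)).
- move=> i hi; rewrite nthw // => pi.
  have pui : (0 < nth 0%R u i)%R by rewrite -stdpos.
  have -> : npos (std_pos u) = count (fun x => 0 < x)%R (std_pos u).
    by rewrite (count_nth (fun x => 0 < x)%R) swE size_map su.
  rewrite swE count_map.
  rewrite (eq_count (a2 := fun x => 0 < x)%R); last by move=> x; rewrite /= stdpos.
  rewrite /stdf pui /=.
  apply: leq_trans (count_undup _ _).
  apply: (count_lt_in (x := nth 0%R u i)).
  - by move=> y /andP [].
  - by rewrite mem_undup mem_nth ?su.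
  - by [].
  - by rewrite /= ltxx andbF.
Qed.

Lemma wf_P2 w : wf w -> w \in P2 m.
Proof.
case=> Sz E D Bd.
pose B := [set i : 'I_m | (0 < nth 0%R w i)%R].
pose rk (b : 'I_m) := #|[set b' in B | (b' < b)%N]|.
have cardB : #|B| = npos w by rewrite /B (card_iota (fun j => 0 < nth 0%R w j)%R).
have rk_lt : forall b, b \in B -> (rk b < #|B|)%N.
  move=> b bB; apply: proper_card; apply/properP; split.
  - by apply/subsetP => x; rewrite inE => /andP [].
  - by exists b => //; rewrite inE ltnn andbF.
have rk_mono : forall b1 b2 : 'I_m, b1 \in B -> (b1 < b2)%N -> (rk b1 < rk b2)%N.
  move=> b1 b2 b1B lt; apply: proper_card; apply/properP; split.
  - apply/subsetP => x; rewrite !inE => /andP [-> h] /=; exact: ltn_trans h lt.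
  - by exists b1; [rewrite inE b1B lt | rewrite inE ltnn andbF].
have rk_inj : {in B &, injective rk}.
  move=> b1 b2 h1 h2 e; apply: val_inj; case: (ltngtP b1 b2) => // lt.
    by have := rk_mono _ _ h1 lt; rewrite e ltnn.
  by have := rk_mono _ _ h2 lt; rewrite e ltnn.
have rk_surj : forall r, (r < #|B|)%N -> exists2 b, b \in B & rk b = r.
  move=> r hr.
  have U : uniq (map rk (enum B)).
    by rewrite map_inj_in_uniq ?enum_uniq // => x y; rewrite !mem_enum; apply: rk_inj.
  have sub : {subset map rk (enum B) <= iota 0 #|B|}.
    move=> y /mapP [b]; rewrite mem_enum => bB ->; rewrite mem_iota add0n; exact: rk_lt.
  have sz : size (iota 0 #|B|) = size (map rk (enum B)) by rewrite size_iota size_map -cardE.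
  have [_ eqs] := uniq_min_size U sub (eq_leq sz).
  have : r \in map rk (enum B) by rewrite eqs mem_iota add0n.
  by move=> /mapP [b]; rewrite mem_enum => bB ->; exists b.
have posw : forall i : 'I_m, i \in B -> (0 < nth 0%R w i)%R by move=> i; rewrite inE.
have tgtex : forall i : 'I_m, i \in B -> exists2 b, b \in B & rk b = (`|nth 0%R w i|).-1.
  move=> i iB; apply: rk_surj; rewrite cardB.
  have p := posw i iB.
  apply: (leq_trans _ (Bd i (ltn_ord i) p)); rewrite prednK ?absz_gt0 ?gt_eqF //.
pose tgt (i : 'I_m) := odflt i [pick b in B | rk b == (`|nth 0%R w i|).-1].
have tgtP : forall i, i \in B -> tgt i \in B /\ rk (tgt i) = (`|nth 0%R w i|).-1.
  move=> i iB; rewrite /tgt; case: pickP => [b /andP [bB /eqP e]|none] //=.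
  have [b bB e] := tgtex i iB; by have := none b; rewrite bB e eqxx.
pose pf (i : 'I_m) := if i \in B then tgt i else i.
have pf_inj : injective pf.
  move=> i j; rewrite /pf; case iB: (i \in B); case jB: (j \in B).
  - move=> e; have [_ ri] := tgtP i iB; have [_ rj] := tgtP j jB.
    have hpi := posw i iB; have hpj := posw j jB.
    have ai : (0 < `|nth 0%R w i|)%N by rewrite absz_gt0 gt_eqF.
    have aj : (0 < `|nth 0%R w j|)%N by rewrite absz_gt0 gt_eqF.
    have ea : `|nth 0%R w i|%N = `|nth 0%R w j|%N.
      by rewrite -(prednK ai) -(prednK aj) -ri -rj e.
    have ew : nth 0%R w i = nth 0%R w j by rewrite -(posK hpi) -(posK hpj) ea.
    by apply: val_inj; apply: D (ltn_ord i) (ltn_ord j) hpi ew.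
  - by move=> e; have [h _] := tgtP i iB; rewrite e jB in h.
  - by move=> e; have [h _] := tgtP j jB; rewrite -e iB in h.
  - by [].
pose p := perm pf_inj.
pose phi := [ffun i : 'I_m => i \notin B].
rewrite mem_undup; apply/allpairsP; exists (p, phi); split.
- by rewrite mem_enum inE.
- by rewrite mem_enum inE.
rewrite /= /perm_form.
set u := [seq (if (p i == i) && phi i then (-1)%R else Posz (p i).+1) | i <- enum 'I_m].
pose stdf (x : int) := if (0 < x)%R
  then Posz (count (fun y => (0 < y) && (y < x))%R (undup u)).+1 else x.
have swE : std_pos u = map stdf u by [].
have su : size u = m by rewrite size_map size_enum_ord.
have Fval : forall j : 'I_m, (if (p j == j) && phi j then (-1)%R else Posz (p j).+1)
    = if j \in B then Posz (p j).+1 else (-1)%R.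
  move=> j; rewrite ffunE; case jB: (j \in B) => /=; first by rewrite andbF.
  by rewrite permE /pf jB eqxx.
have pB : forall j : 'I_m, j \in B -> p j = tgt j.
  by move=> j jB; rewrite permE /pf jB.
have cnt : forall b : 'I_m,
    count (fun y => (0 < y) && (y < Posz b.+1))%R (undup u) = rk b.
  move=> b; rewrite -size_filter /rk cardE -(size_map (fun b' : 'I_m => Posz b'.+1)).
  apply: perm_size; apply: uniq_perm.
  - by rewrite filter_uniq // undup_uniq.
  - rewrite map_inj_uniq ?enum_uniq // => x y [] e; exact: val_inj.
  move=> y; rewrite mem_filter mem_undup; apply/andP/mapP.
  - move=> [/andP [y0 yb] /mapP [j _]]; rewrite Fval; case jB: (j \in B); last first.
      by move=> e; rewrite e in y0.
    move=> ey; exists (p j); last by [].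
    rewrite mem_enum inE pB // (proj1 (tgtP j jB)) /=.
    by rewrite ey ltz_nat ltnS pB in yb.
  - move=> [b']; rewrite mem_enum inE => /andP [b'B lt] ->; split.
      by rewrite ltz_nat ltz_nat ltnS. 
    apply/mapP; exists (invg p b'); first by rewrite mem_enum.
    have jB : invg p b' \in B.
      case nB: (invg p b' \in B) => //.
      have := permKV p b'; rewrite permE /pf nB => e.
      by rewrite -e nB in b'B.
    by rewrite Fval jB permKV.
apply: (@eq_from_nth _ 0%R); first by rewrite swE size_map su Sz.
move=> i; rewrite Sz => hi.
rewrite swE (nth_map 0%R) ?su //.
have -> : nth 0%R u i = if Ordinal hi \in B then Posz (p (Ordinal hi)).+1 else (-1)%R.
  rewrite (nth_map (Ordinal hi)) ?size_enum_ord //.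
  have -> : nth (Ordinal hi) (enum 'I_m) i = Ordinal hi.
    by apply: val_inj; rewrite /= nth_enum_ord.
  exact: Fval.
case iB: (Ordinal hi \in B).
- rewrite /stdf /= cnt pB // (proj2 (tgtP _ iB)).
  have hpi := posw _ iB.
  by rewrite prednK ?absz_gt0 ?gt_eqF // posK.
- rewrite /stdf /=; case/orP: (E i hi) => [/eqP //|h].
  by rewrite inE h in iB.
Qed.

End Perm.

Theorem theorem4p3 (n k : nat) : (1 <= n)%N ->
  size [seq w <- P2 n.-1 | avoids pat321 w & des w == k] =
  #|[set s : 'S_n | avoids pat321 (perm_word s) & peaks s == k]|.
Proof.
case: n => [//|m] _ /=.
rewrite cardE -(size_map (@Phi m)).
apply: perm_size; apply: uniq_perm.
- by rewrite filter_uniq // undup_uniq.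
- rewrite map_inj_in_uniq ?enum_uniq // => s t; rewrite !mem_enum !inE.
  move=> /andP [/avoidsP /avs_iff hs _] /andP [/avoidsP /avs_iff ht _].
  exact: Phi_inj (avs_good hs) (avs_good ht).
- move=> w; rewrite mem_filter; apply/andP/mapP.
  + move=> [/andP [av dk] wP].
    have W := P2_wf wP.
    have [s [G E]] := wf_surj W.
    have As : avs s by apply: good_Phi_avs G _; rewrite E; apply/avoidsP.
    exists s => //; rewrite mem_enum inE; apply/andP; split.
      by apply/avoidsP/avs_iff.
    by rewrite -des_peaks // E.
  + move=> [s]; rewrite mem_enum inE => /andP [/avoidsP /avs_iff As pk] ->.
    split.
      by apply/andP; split; [apply/avoidsP; exact: avs_Phi | rewrite des_peaks].
    by apply: wf_P2; exact: wf_Phi.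
Qed.
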